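(* Let $\mathcal{L}_{\rm GM}$ be the golden mean language and let ${\rm S}:\mathcal{L}_{\rm GM}\to\mathbb{N}$ be a homomorphism. Write ${\rm S}_a={\rm S}(a)$, ${\rm S}_b={\rm S}(b)$, and suppose $\gcd({\rm S}_a,{\rm S}_b)=1$, ${\rm S}_a>1$ and ${\rm S}_b>1$. Then $\mathbb{N}\setminus {\rm S}(\mathcal{L}_{\rm GM})$ is finite and nonempty, and $$\max\,\big(\mathbb{N}\setminus {\rm S}(\mathcal{L}_{\rm GM})\big)={\rm S}_a({\rm S}_a-3)+{\rm S}_b({\rm S}_a-1).$$
   Context: $\mathbb{N}=\{1,2,3,\dots\}$. The golden mean language $\mathcal{L}_{\rm GM}$ is the set of all nonempty finite words over the alphabet $\{a,b\}$ in which $bb$ does not occur as a subword (factor). A homomorphism ${\rm S}:\mathcal{L}\to\mathbb{N}$ of a language $\mathcal{L}$ over an alphabet is a map with ${\rm S}(w_1w_2\cdots w_n)={\rm S}(w_1)+\cdots+{\rm S}(w_n)$ for every word $w_1\cdots w_n\in\mathcal{L}$ (equivalently ${\rm S}(vw)={\rm S}(v)+{\rm S}(w)$), so it is determined by the positive integers ${\rm S}(a),{\rm S}(b)$. *)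

(* Defs.v *)
From mathcomp Require Import all_boot all_order all_algebra.
Set Implicit Arguments. Unset Strict Implicit. Unset Printing Implicit Defensive.

Inductive letter : Type := La | Lb.

Definition word := seq letter.

Definition golden_mean (w : word) : Prop :=
  w <> [::] /\ ~ (exists u v : word, w = u ++ [:: Lb; Lb] ++ v).

Definition is_hom (S : word -> nat) : Prop :=
  forall w : word, golden_mean w -> S w = sumn [seq S [:: x] | x <- w].

Definition gap (S : word -> nat) (n : nat) : Prop :=
  0 < n /\ ~ (exists w : word, golden_mean w /\ S w = n).

(* Main.v *)
Require Import Defs.
From mathcomp Require Import all_boot all_order all_algebra.
From mathcomp Require Import zify.
Import GRing.Theory Num.Theory.

Fixpoint nobb (w : word) : bool :=
  match w with
  | x :: ((y :: _) as w') =>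
      match x, y with Lb, Lb => false | _, _ => nobb w' end
  | _ => true
  end.

Definition ia (x : letter) : bool := if x is La then true else false.
Definition ib (x : letter) : bool := if x is Lb then true else false.

Lemma nobb_cons {x w} : nobb (x :: w) -> nobb w.
Proof. by case: w => [|y s] //=; case: x; case: y. Qed.

Lemma nobbP w : nobb w <-> ~ (exists u v : word, w = u ++ [:: Lb; Lb] ++ v).
Proof.
split.
- move=> H [u [v E]]; subst w.
  elim: u H => [|x u IH] /=; first by [].
  by move/nobb_cons.
- elim: w => [|x w IH] H //.
  move: IH H; case: w => [|y s] IH H //.
  have [Hf|Ht] := boolP (nobb (y :: s)).
  + clear IH; case: x H; case: y Hf => //= Hf H; exfalso; apply: H.
    by exists [::], s.
  + exfalso; move/negP: Ht; apply; apply: IH => -[u [v E]]; apply: H.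
    by exists (x :: u), v; rewrite E.
Qed.

Lemma gm_nobb w : golden_mean w <-> w <> [::] /\ nobb w.
Proof. rewrite /golden_mean; split=> -[h1 h2]; split=> //; by apply/nobbP. Qed.

Lemma count_bound {w} : nobb w ->
  count ib w <= (count ia w).+1 /\ (head La w = La -> count ib w <= count ia w).
Proof.
elim: w => [|x w IH] // H.
have Hw := IH (nobb_cons H).
case: x H => /= H.
- case: Hw => h1 _; split => [|_]; lia.
- split; last by [].
  clear IH; case: w H Hw => [|y s] //= H Hw.
  case: y H Hw => //= H [h1 h2].
  have := h2 erefl; lia.
Qed.

Lemma build {p q} : q <= p.+1 -> exists w, nobb w /\ count ia w = p /\ count ib w = q.
Proof.
elim: p q => [|p IH] q hq.
- case: q hq => [|[|q]] // _; first by exists [::].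
  by exists [:: Lb].
- case: (ltnP q p.+2) => h.
  + have [w [h1 [h2 h3]]] := IH q h.
    exists (La :: w); split; last by rewrite /= h2 h3.
    by case: w h1 {h2 h3}.
  + have -> : q = p.+2 by lia.
    have [w [h1 [h2 h3]]] := IH p.+1 (leqnn _).
    exists (Lb :: La :: w); split; last by rewrite /= h2 h3.
    by case: w h1 {h2 h3}.
Qed.

Lemma sum_counts (S : word -> nat) w :
  sumn [seq S [:: x] | x <- w] = count ia w * S [:: La] + count ib w * S [:: Lb].
Proof. elim: w => [|[] w IH] //=; rewrite IH; lia. Qed.

Lemma m_not_rep A B : coprime A B -> 1 < A -> 1 < B -> forall p q, q <= p.+1 ->
  p * A + q * B <> (A.-1) * (A + B) - 2 * A.
Proof.
move=> cAB hA hB p q hq E.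
have hm : 2 * A <= A.-1 * (A + B).
  have : 2 * A <= A.-1 * (A + 2) by case: A hA {cAB E} => [|[|A']] //= _; nia.
  move/leq_trans; apply; apply: leq_mul => //; lia.
rewrite mulnDr in E hm.
case: (ltnP q A.-1) => hqA.
- set d := A.-1 - q.
  have hd : 0 < d < A by rewrite /d; lia.
  have E2 : d * B + A.-1 * A = (p + 2) * A.
    have : d * B + q * B = A.-1 * B by rewrite -mulnDl /d; congr (_ * _); lia.
    rewrite mulnDl; lia.
  have : A %| d * B.
    have : A %| (p + 2) * A by apply: dvdn_mull.
    by rewrite -E2 dvdn_addl // dvdn_mull.
  rewrite mulnC (Gauss_dvdr _ cAB).
  move/dvdn_leq; lia.
- have h1 : A.-2 * A <= p * A by apply: leq_mul; lia.
  have h2 : A.-1 * B <= q * B by apply: leq_mul.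
  nia.
Qed.

Lemma mod_le A x y : 0 < A -> x = y %[mod A] -> y < x + A -> y <= x.
Proof.
move=> hA hxy hlt; rewrite leqNgt; apply/negP => hxy'.
have : A %| y - x by rewrite -eqn_mod_dvd ?(ltnW hxy') // hxy.
move/dvdn_leq; lia.
Qed.

Lemma rep_above A B : coprime A B -> 1 < A -> 1 < B -> forall n,
  (A.-1) * (A + B) - 2 * A < n -> exists p q, q <= p.+1 /\ n = p * A + q * B.
Proof.
move=> cAB hA hB n hn.
have [a ha hdiv] := Bezoutl B (ltnW hA).
move: cAB; rewrite /coprime => /eqP cAB; rewrite cAB in hdiv.
set q := (n * A.-1 * a) %% A.
have hqA : q < A by rewrite /q ltn_mod; lia.
have hqn : q * B = n %[mod A].
  apply/eqP; rewrite -(eqn_modDr (n * A.-1)).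
  have -> : n + n * A.-1 = n * A by rewrite -{1}(muln1 n) -mulnDr add1n prednK //; lia.
  rewrite modnMl.
  rewrite /q -modnDml modnMml modnDml.
  have -> : n * A.-1 * a * B + n * A.-1 = n * A.-1 * (1 + a * B) by rewrite mulnDr muln1 !mulnA addnC.
  have h0 : (1 + a * B) %% A = 0 by apply/eqP.
  by rewrite -modnMmr h0 muln0 mod0n.
have hle : q * B + A * q.-1 <= n.
  apply: (mod_le _ _ _ (ltnW hA)).
  - by rewrite -modnDmr modnMr addn0 hqn.
  - case: q hqA hqn => [|q'] hqA _ /=; first by lia.
    have : q'.+1 * (A + B) <= A.-1 * (A + B) by apply: leq_mul; lia.
    nia.
have : A %| n - q * B.
  rewrite -eqn_mod_dvd; last exact: leq_trans (leq_addr _ _) hle.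
  by rewrite hqn.
case/dvdnP => k hk.
have hk2 : q.-1 * A <= k * A by rewrite -hk; lia.
rewrite leq_pmul2r in hk2; last by lia.
exists k, q; split; first by lia.
lia.
Qed.

Lemma gap_iff (S : word -> nat) (hS : is_hom S) n :
  gap S n <-> 0 < n /\ ~ (exists p q, q <= p.+1 /\ n = p * S [:: La] + q * S [:: Lb]).
Proof.
rewrite /gap; split=> -[hn H]; split=> //.
- move=> [p [q [hq E]]]; apply: H.
  have [w [hw [h1 h2]]] := build hq.
  exists w; split.
  + apply/gm_nobb; split => //; move=> h0; subst w; move: hn; rewrite E -h1 -h2 /=; lia.
  + by rewrite hS ?sum_counts ?h1 ?h2 //; apply/gm_nobb; split => // h0; subst w;
      move: hn; rewrite E -h1 -h2 /=; lia.
- case=> w [/gm_nobb [hw0 hw] E]; apply: H.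
  case: (count_bound hw) => h1 _.
  exists (count ia w), (count ib w); split => //.
  by rewrite -E hS ?sum_counts //; apply/gm_nobb.
Qed.

Theorem theorem1 (S : word -> nat)
  (hS : is_hom S)
  (hpos : forall w, golden_mean w -> 0 < S w)
  (hgcd : gcdn (S [:: La]) (S [:: Lb]) = 1)
  (ha : 1 < S [:: La]) (hb : 1 < S [:: Lb]) :
  (exists n, gap S n) /\
  (exists B, forall n, gap S n -> n <= B) /\
  (exists m, gap S m /\ (forall n, gap S n -> n <= m) /\
     (Posz m = (Posz (S [:: La]) * (Posz (S [:: La]) - 3)
               + Posz (S [:: Lb]) * (Posz (S [:: La]) - 1))%R)).
Proof.
have cAB : coprime (S [:: La]) (S [:: Lb]) by rewrite /coprime hgcd.
move: hgcd.
set A := S [:: La]; set B := S [:: Lb] => hgcd.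
set m := A.-1 * (A + B) - 2 * A.
have hm : 0 < m.
  rewrite /m; case: (ltnP 2 A) => hA3.
  - have : 2 * (A + B) <= A.-1 * (A + B) by apply: leq_mul; lia.
    lia.
  - have eA : A = 2 by lia.
    case: (ltnP 2 B) => hB3.
    + rewrite eA; lia.
    + have eB : B = 2 by lia.
      by move: hgcd; rewrite eA eB.
have gm : gap S m.
  apply/gap_iff => //; split => // -[p [q [hq E]]].
  exact: (m_not_rep _ _ cAB ha hb _ _ hq (esym E)).
have bd : forall n, gap S n -> n <= m.
  move=> n /gap_iff -/(_ hS) [hn H]; rewrite leqNgt; apply/negP => hlt.
  by apply: H; apply: rep_above.
split; first by exists m.
split; first by exists m.
exists m; split => //; split => //.
rewrite /m.
have h1 : 2 * A <= A.-1 * (A + B) by lia.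
lia.
Qed.
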